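(* Consider the following fully discrete moment scheme for the one-dimensional Boltzmann–BGK equation. Fix $M\ge 3$ and $N>M$, an interval $[\xi_{\min},\xi_{\max}]$, the $N$-point Gauss–Legendre nodes $\xi_1,\dots,\xi_N$ and weights $\omega_1,\dots,\omega_N>0$ on it, $A\in\mathbb R^{M\times N}$ with $A_{mi}=\xi_i^{m-1}$, $A_{\mathrm{cons}}\in\mathbb R^{3\times N}$ the first three rows of $A$, $L=\operatorname{diag}(\omega_i)$, $\Xi=\operatorname{diag}(\xi_i)$, $|\Xi|=\operatorname{diag}(|\xi_i|)$, and $R=\{ALz: z\in\mathbb R^N,\ z>0\}$. The spatial domain $[x_{\min},x_{\max}]$ is divided into $N_x$ uniform cells $\mathcal I_i$ of width $\Delta x$, time steps have size $\Delta t$, and $\Lambda:=\Delta t/\Delta x$. Given positive initial data $f_0(x,\xi)$ and positive inflow boundary data $f_{in}(x,t,\xi)$, the moment vectors $u_i^k\in\mathbb R^M$ are initialized by $u_i^1=\frac1{\Delta x}\int_{\mathcal I_i}\sum_{j}\omega_j(1,\xi_j,\dots,\xi_j^{M-1})^T f_0(x,\xi_j)\,dx$ and for $k=1,2,\dots$ updated by: (1) (entropy minimization) $W_{\mathcal M,i}^k\in\mathbb R^N_{>0}$ minimizes $\sum_j w_j\log(w_j)\omega_j$ over $w\in\mathbb R^N_{>0}$ subject to $A_{\mathrm{cons}}Lw$ being equal to the first three entries of $u_i^k$; (2) (collision) $u_i^{k^*}=\frac{1}{1+\Delta t/\tau_i}u_i^k+\frac{\Delta t/\tau_i}{1+\Delta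 t/\tau_i}ALW_{\mathcal M,i}^k$ with relaxation times $\tau_i>0$; (3) (optimization) $W_i^{k^*}$ solves $\min_{W\in\mathbb R^N}\frac12\|W\|_{l^2}^2$ subject to $ALW=u_i^{k^*}$, $W>0$; (4) (transport) $u_i^{k+1}=u_i^{k^*}-\Lambda\big(\mathcal F(W_{i+1}^{k^*},W_i^{k^*})-\mathcal F(W_i^{k^*},W_{i-1}^{k^*})\big)$, where $\mathcal F(W_1,W_2)=\frac12\big(AL(\Xi-|\Xi|)W_1+AL(\Xi+|\Xi|)W_2\big)$ and the ghost values $W_0^{k^*}$, $W_{N_x+1}^{k^*}$ are the vectors of values $(f_{in}(x,t_k,\xi_j))_j$ at $x=x_{\min}$ and $x=x_{\max}$ respectively. Assume that for all $x$ and $t$ the vectors $\sum_j\omega_j(1,\xi_j,\dots,\xi_j^{M-1})^T f_{in}(x,t,\xi_j)$ and $\sum_j\omega_j(1,\xi_j,\dots,\xi_j^{M-1})^T f_0(x,\xi_j)$ belong to $R$. Then the quadratic optimization problem in step (3) is feasible (at every time step and in every cell) if $\Lambda\in\big(0,\min\{|\xi_{\max}^{-1}|,|\xi_{\min}^{-1}|\}\big]$.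
   Context: Vector inequalities $z>0$, $W>0$ are componentwise; $\mathbb R^N_{>0}$ denotes vectors with all entries positive. The scheme is a finite-volume/method-of-moments discretization in which moments are computed by the Gauss–Legendre quadrature on the truncated velocity interval $[\xi_{\min},\xi_{\max}]$, and the optimization problem in step (3) is called feasible if its constraint set is nonempty. *)

(* Defs.v *)
From HB Require Import structures.
From mathcomp Require Import all_boot all_order all_algebra.
From mathcomp Require Import all_classical all_reals all_analysis.
Set Implicit Arguments.
Unset Strict Implicit.
Unset Printing Implicit Defensive.
Import Order.TTheory GRing.Theory Num.Theory.
Import numFieldNormedType.Exports.

Local Open Scope classical_set_scope.
Local Open Scope ring_scope.

Section BGKDefs.
Context {R : realType}.

(* These properties
   determine the Gauss--Legendre nodes and weights uniquely. *)
Definition GaussLegendre (a b : R) (N : nat) (xi w : 'I_N -> R) : Prop :=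
  [/\ a < b,
      (forall i j : 'I_N, (i < j)%N -> xi i < xi j),
      (forall i, a <= xi i <= b),
      (forall i, 0 < w i) &
      (forall m : nat, (m < 2 * N)%N ->
         \sum_(i < N) w i * xi i ^+ m = (b ^+ m.+1 - a ^+ m.+1) / m.+1%:R)].

(* A in R^{M x N}, A_{mi} = xi_i^{m-1}  (0-based: xi_i^m) *)
Definition momA (M N : nat) (xi : 'I_N -> R) : 'M[R]_(M, N) :=
  \matrix_(m < M, i < N) xi i ^+ m.

Definition Acons (N : nat) (xi : 'I_N -> R) : 'M[R]_(3, N) := momA 3 xi.

Definition Lmat (N : nat) (w : 'I_N -> R) : 'M[R]_N := diag_mx (\row_i w i).
Definition Ximat (N : nat) (xi : 'I_N -> R) : 'M[R]_N := diag_mx (\row_i xi i).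
Definition absXimat (N : nat) (xi : 'I_N -> R) : 'M[R]_N :=
  diag_mx (\row_i `|xi i|).

Definition posv (N : nat) (z : 'cV[R]_N) : Prop := forall i, 0 < z i 0.

Definition Rset (M N : nat) (xi w : 'I_N -> R) : set 'cV[R]_M :=
  [set u | exists z : 'cV[R]_N, posv z /\ u = momA M xi *m Lmat w *m z].

Definition sample (N : nat) (xi : 'I_N -> R) (g : R -> R) : 'cV[R]_N :=
  \col_(j < N) g (xi j).

Definition first3 (M : nat) (u : 'cV[R]_M) : 'cV[R]_3 :=
  \col_(m < 3) (if insub (val m) is Some m' then u m' 0 else 0).

Definition entropy (N : nat) (w : 'I_N -> R) (W : 'cV[R]_N) : R :=
  \sum_(j < N) W j 0 * ln (W j 0) * w j.

Definition is_entropy_min (M N : nat) (xi w : 'I_N -> R) (u : 'cV[R]_M)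
    (W : 'cV[R]_N) : Prop :=
  [/\ posv W, Acons xi *m Lmat w *m W = first3 u &
      forall W' : 'cV[R]_N, posv W' -> Acons xi *m Lmat w *m W' = first3 u ->
        entropy w W <= entropy w W'].

Definition qp_constr (M N : nat) (xi w : 'I_N -> R) (u : 'cV[R]_M)
    (W : 'cV[R]_N) : Prop :=
  momA M xi *m Lmat w *m W = u /\ posv W.

Definition qp_feasible (M N : nat) (xi w : 'I_N -> R) (u : 'cV[R]_M) : Prop :=
  exists W : 'cV[R]_N, qp_constr xi w u W.

Definition half_sqnorm (N : nat) (W : 'cV[R]_N) : R :=
  2^-1 * \sum_(j < N) W j 0 ^+ 2.

Definition qp_sol (M N : nat) (xi w : 'I_N -> R) (u : 'cV[R]_M)
    (W : 'cV[R]_N) : Prop :=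
  qp_constr xi w u W /\
  forall W' : 'cV[R]_N, qp_constr xi w u W' -> half_sqnorm W <= half_sqnorm W'.

Definition flux (M N : nat) (xi w : 'I_N -> R) (W1 W2 : 'cV[R]_N) : 'cV[R]_M :=
  2^-1 *: (momA M xi *m Lmat w *m ((Ximat xi - absXimat xi) *m W1)
          + momA M xi *m Lmat w *m ((Ximat xi + absXimat xi) *m W2)).

(* cell I_i = [xmin + (i-1) dx, xmin + i dx], i = 1..Nx *)
Definition cell (xmin dx : R) (i : nat) : set R :=
  `[xmin + (i.-1)%:R * dx, xmin + i%:R * dx]%classic.

Definition ghostW (N Nx : nat) (xi : 'I_N -> R) (fin : R -> R -> R -> R)
    (xmin xmax t : R) (W : nat -> 'cV[R]_N) (i : nat) : 'cV[R]_N :=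
  if i == 0%N then sample xi (fin xmin t)
  else if i == Nx.+1 then sample xi (fin xmax t)
  else W i.

End BGKDefs.

Arguments momA {R} M {N} xi.
Arguments Rset {R} M {N} xi w.
Arguments flux {R} M {N} xi w W1 W2.

(* Main.v *)
Require Import Defs.
From HB Require Import structures.
From mathcomp Require Import all_boot all_order all_algebra.
From mathcomp Require Import all_classical all_reals all_analysis.
Import Order.TTheory GRing.Theory Num.Theory.
Import numFieldNormedType.Exports.
Local Open Scope classical_set_scope.
Local Open Scope ring_scope.
From mathcomp Require Import ring lra zify.

Lemma ALz_entry (R : realType) M N (xi w : 'I_N -> R) (z : 'cV[R]_N) m :
  (momA M xi *m Lmat w *m z) m 0 = \sum_j xi j ^+ m * w j * z j 0.
Proof.
rewrite mxE; apply: eq_bigr => j _.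
by rewrite /Lmat mul_mx_diag !mxE.
Qed.

Definition inR (R : realType) M N (xi w : 'I_N -> R) (u : 'cV[R]_M) :=
  exists z : 'cV[R]_N, posv z /\ u = momA M xi *m Lmat w *m z.
Arguments inR {R M N} xi w u.

Lemma inR_comb (R : realType) M N (xi w : 'I_N -> R) (u : 'cV[R]_M) (V : 'cV[R]_N) (a b : R) :
  0 < a -> 0 <= b -> inR xi w u -> posv V ->
  inR xi w (a *: u + b *: (momA M xi *m Lmat w *m V)).
Proof.
move=> a0 b0 [z [zp ->]] Vp; exists (a *: z + b *: V); split.
  move=> j; rewrite !mxE.
  have h1 : 0 < a * z j 0 := mulr_gt0 a0 (zp j).
  have h2 : 0 <= b * V j 0 by apply: mulr_ge0 => //; apply: ltW.
  lra.
by rewrite mulmxDr !scalemxAr.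
Qed.

Lemma lam_bound (R : realType) (lam x y : R) :
  0 < lam -> y != 0 -> `|x| <= `|y| -> lam <= `|y^-1| -> lam * `|x| <= 1.
Proof.
move=> l0 y0 xy ly.
have ay : 0 < `|y| by rewrite normr_gt0.
apply: (le_trans (y := `|y^-1| * `|y|)).
  apply: ler_pM => //; exact: ltW.
by rewrite normfV mulVf // gt_eqF.
Qed.

Lemma transport_pos (R : realType) M N (xi w : 'I_N -> R) (lam : R)
   (Wm Wi Wp : 'cV[R]_N) :
  0 < lam -> (forall j, lam * `|xi j| <= 1) -> posv Wm -> posv Wi -> posv Wp ->
  inR xi w (momA M xi *m Lmat w *m Wi -
     lam *: (flux M xi w Wp Wi - flux M xi w Wi Wm)).
Proof.
move=> l0 lb pm pi pp.
set D1 := Ximat xi - absXimat xi.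
set D2 := Ximat xi + absXimat xi.
exists (Wi - lam *: (2^-1 *: (D1 *m Wp + D2 *m Wi - (D1 *m Wi + D2 *m Wm)))).
split; last first.
  by rewrite /flux /D1 /D2 mulmxBr -!scalemxAr mulmxBr !mulmxDr !scalerBr.
move=> j.
rewrite /D1 /D2 !mulmxBl !mulmxDl /Ximat /absXimat !mul_diag_mx !mxE.
have := lb j; have := pm j; have := pi j; have := pp j.
set x := xi j; set p := Wp j 0; set a := Wi j 0; set m := Wm j 0.
move=> p0 a0 m0 lx.
have [x0|x0] := leP 0 x.
  rewrite ger0_norm // in lx *.
  have t0 : 0 <= lam * x by apply: mulr_ge0 => //; apply: ltW.
  have [am|am] := leP a m; nra.
rewrite ltr0_norm // in lx *.
have t0 : 0 <= lam * - x by apply: mulr_ge0; [apply: ltW | lra].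
have [am|am] := leP a p; nra.
Qed.
Lemma Rint_gt0 (R : realType) (a b : R) (f : R -> R) : a < b ->
  (@lebesgue_measure R).-integrable `[a, b] (EFin \o f) ->
  (forall x, a <= x <= b -> 0 < f x) ->
  0 < Rintegral (@lebesgue_measure R) `[a, b] f.
Proof.
move=> ab intf fpos.
have mD : measurable (`[a, b] : set (measurableTypeR R)) := measurable_itv `[a, b].
have fin := integrable_fin_num mD intf.
have ge0 : (0 <= \int[lebesgue_measure]_(x in `[a, b]) (f x)%:E)%E.
  apply: integral_ge0 => x /= xab; rewrite lee_fin ltW //; apply: fpos.
  by move: xab; rewrite in_itv.
rewrite /Rintegral; apply: fine_gt0; apply/andP; split; last first.
  by rewrite ltey_eq fin.
rewrite lt_neqAle ge0 andbT; apply/negP => /eqP H.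
have : (\int[lebesgue_measure]_(x in `[a, b]) `|(f x)%:E| = 0)%E.
  transitivity (\int[lebesgue_measure]_(x in `[a, b]) (f x)%:E)%E; last exact: esym H. apply: eq_integral => x xab /=.
  rewrite ger0_norm // ltW //.
  by apply: fpos; move: xab; rewrite inE /= in_itv.
move/(ae_eq_integral_abs _ mD) => -[].
  by case/integrableP: intf.
move=> A [mA A0 sub].
have : (lebesgue_measure (`[a, b] : set R) <= lebesgue_measure A)%E.
  apply: le_measure; rewrite ?inE //.
  move=> x xab; apply: sub => /= H1; move: (H1 xab) => /= [] /eqP.
  by rewrite gt_eqF //; apply: fpos; move: xab; rewrite /= in_itv.
rewrite A0 lebesgue_measure_itv /= lte_fin ab /= lee_fin subr_le0 leNgt ab //.
Qed.
Lemma Rint_sum (R : realType) (a b : R) (I : Type) (s : seq I) (c : I -> R)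
  (g : I -> R -> R) :
  (forall j, (@lebesgue_measure R).-integrable `[a, b] (EFin \o g j)) ->
  (@lebesgue_measure R).-integrable `[a, b]
     (EFin \o (fun x => \sum_(j <- s) c j * g j x)) /\
  Rintegral (@lebesgue_measure R) `[a, b] (fun x => \sum_(j <- s) c j * g j x)
  = \sum_(j <- s) c j * Rintegral (@lebesgue_measure R) `[a, b] (g j).
Proof.
move=> ig.
have mD : measurable (`[a, b] : set (measurableTypeR R)) := measurable_itv `[a, b].
elim: s => [|j s [IHi IHe]].
  split.
    apply: (eq_integrable _ (cst 0%E)) => //; last exact: integrable0.
    by move=> x _ /=; rewrite big_nil.
  rewrite big_nil /Rintegral.
  under eq_integral do rewrite big_nil.
  by rewrite integral0.
have iZ : (@lebesgue_measure R).-integrable `[a, b] (EFin \o (fun x => c j * g j x)).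
  have := integrableZl mD (c j) (ig j).
  apply: eq_integrable => // x _ /=; by rewrite EFinM.
split.
  have := integrableD mD iZ IHi.
  by apply: eq_integrable => // x _ /=; rewrite big_cons EFinD.
under eq_Rintegral do rewrite big_cons.
by rewrite RintegralD // RintegralZl // IHe big_cons.
Qed.

Lemma ghost_pos (R : realType) N Nx (xi : 'I_N -> R) fin xmin xmax t
   (W : nat -> 'cV[R]_N) ximin ximax j :
  (forall i, ximin <= xi i <= ximax) ->
  (forall x t v, xmin <= x <= xmax -> ximin <= v <= ximax -> 0 < fin x t v) ->
  xmin < xmax ->
  (forall i, (1 <= i <= Nx)%N -> posv (W i)) -> (j <= Nx.+1)%N ->
  posv (ghostW Nx xi fin xmin xmax t W j).
Proof.
move=> xir finp xlt Wp jle; rewrite /ghostW.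
case: eqP => [_|j0].
  by move=> l; rewrite mxE; apply: finp => //; rewrite lexx ltW.
case: eqP => [_|j1].
  by move=> l; rewrite mxE; apply: finp => //; rewrite lexx ltW.
apply: Wp; apply/andP; split; first by rewrite lt0n; apply/eqP.
by move: jle; rewrite leq_eqVlt => /orP[/eqP //|].
Qed.
Theorem lemma3p1 (R : realType) (M N : nat) (ximin ximax : R)
    (xi w : 'I_N -> R) (xmin xmax : R) (Nx : nat) (dt : R)
    (tau : nat -> R) (f0 : R -> R -> R) (fin : R -> R -> R -> R)
    (u : nat -> nat -> 'cV[R]_M) (WM : nat -> nat -> 'cV[R]_N)
    (us : nat -> nat -> 'cV[R]_M) (W : nat -> nat -> 'cV[R]_N) (K : nat) :
  (3 <= M)%N -> (M < N)%N ->
  GaussLegendre ximin ximax xi w ->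
  xmin < xmax -> (0 < Nx)%N -> 0 < dt ->
  (forall i, (1 <= i <= Nx)%N -> 0 < tau i) ->
  (forall x v, xmin <= x <= xmax -> ximin <= v <= ximax -> 0 < f0 x v) ->
  (forall x t v, xmin <= x <= xmax -> ximin <= v <= ximax -> 0 < fin x t v) ->
  (forall x t, xmin <= x <= xmax ->
     Rset M xi w (momA M xi *m Lmat w *m sample xi (fin x t))) ->
  (forall x, xmin <= x <= xmax ->
     Rset M xi w (momA M xi *m Lmat w *m sample xi (f0 x))) ->
  (forall j : 'I_N, (@lebesgue_measure R).-integrable `[xmin, xmax]
       (fun x => (f0 x (xi j))%:E)) ->
  (* step (0): initialization *)
  (forall i, (1 <= i <= Nx)%N ->
     u 1%N i = ((xmax - xmin) / Nx%:R)^-1 *: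
       \col_(m < M) Rintegral (@lebesgue_measure R)
          (cell xmin ((xmax - xmin) / Nx%:R) i)
          (fun x => \sum_(j < N) w j * xi j ^+ m * f0 x (xi j))) ->
  (* step (1): entropy minimization, for k = 1..K *)
  (forall k i, (1 <= k <= K)%N -> (1 <= i <= Nx)%N ->
     is_entropy_min xi w (u k i) (WM k i)) ->
  (* step (2): collision, for k = 1..K *)
  (forall k i, (1 <= k <= K)%N -> (1 <= i <= Nx)%N ->
     us k i = (1 + dt / tau i)^-1 *: u k i
              + ((dt / tau i) / (1 + dt / tau i)) *:
                  (momA M xi *m Lmat w *m WM k i)) ->
  (* step (3): W_i^{k*} solves the QP, for the earlier steps k = 1..K-1 *)
  (forall k i, (1 <= k < K)%N -> (1 <= i <= Nx)%N ->
     qp_sol xi w (us k i) (W k i)) ->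
  (* step (4): transport, for k = 1..K-1, t_k = (k-1) dt *)
  (forall k i, (1 <= k < K)%N -> (1 <= i <= Nx)%N ->
     u k.+1 i = us k i - (dt / ((xmax - xmin) / Nx%:R)) *:
       (flux M xi w
          (ghostW Nx xi fin xmin xmax ((k.-1)%:R * dt) (W k) i.+1)
          (ghostW Nx xi fin xmin xmax ((k.-1)%:R * dt) (W k) i)
        - flux M xi w
          (ghostW Nx xi fin xmin xmax ((k.-1)%:R * dt) (W k) i)
          (ghostW Nx xi fin xmin xmax ((k.-1)%:R * dt) (W k) i.-1))) ->
  (* CFL condition Lambda in (0, min{|ximax^-1|, |ximin^-1|}] *)
  0 < dt / ((xmax - xmin) / Nx%:R) ->
  dt / ((xmax - xmin) / Nx%:R) <= Num.min `|ximax^-1| `|ximin^-1| ->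
  (1 <= K)%N ->
  forall i, (1 <= i <= Nx)%N -> qp_feasible xi w (us K i).
Proof.
move=> hM hMN GL xlt Nx0 dt0 tau0 f0p finp _ _ intf0 init ent coll qp trans
  lam0 lamle K1 i hi.
set dx := (xmax - xmin) / Nx%:R in init trans lam0 lamle.
set lam := dt / dx in trans lam0 lamle.
case: GL => [ab xiinc xirng wpos _].
have dx0 : 0 < dx by apply: divr_gt0; [rewrite subr_gt0 | rewrite ltr0n].
have Ndx : Nx%:R * dx = xmax - xmin.
  by rewrite /dx mulrC -mulrA mulVf ?mulr1 // pnatr_eq0 -lt0n.
have lb : forall j, lam * `|xi j| <= 1.
  move=> j; have /andP[l u'] := xirng j.
  move: lamle; rewrite le_min => /andP[l1 l2].
  have [x0|x0] := leP 0 (xi j).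
    have [->|xne] := eqVneq (xi j) 0; first by rewrite normr0 mulr0.
    have xp : 0 < xi j by rewrite lt_neqAle eq_sym xne x0.
    apply: (@lam_bound R lam (xi j) ximax lam0 _ _ l1).
      by rewrite gt_eqF // (lt_le_trans xp).
    by rewrite !ger0_norm // ltW // (lt_le_trans xp).
  apply: (@lam_bound R lam (xi j) ximin lam0 _ _ l2).
    by rewrite lt_eqF // (le_lt_trans l).
  rewrite !ltr0_norm // ?lerN2 // (le_lt_trans l) //.
have base : forall i, (1 <= i <= Nx)%N -> inR xi w (u 1%N i).
  move=> i0 /andP[i1 i2].
  set lo := xmin + (i0.-1)%:R * dx.
  set hI := xmin + i0%:R * dx.
  have lohi : lo < hI.
    rewrite ltrD2l ltr_pM2r // ltr_nat; by case: i0 i1 {i2 lo hI}.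
  have los : xmin <= lo by rewrite lerDl mulr_ge0 // ltW.
  have his : hI <= xmax.
    rewrite /hI -lerBrDl -Ndx ler_pM2r // ler_nat //.
  have mI : measurable (`[lo, hI] : set (measurableTypeR R)) := measurable_itv _.
  have mJ : measurable (`[xmin, xmax] : set (measurableTypeR R)) := measurable_itv _.
  have sub : forall x, lo <= x <= hI -> xmin <= x <= xmax.
    move=> x /andP[h1 h2]; apply/andP; split.
      exact: le_trans h1.
    exact: le_trans his.
  have intj : forall j, (@lebesgue_measure R).-integrable `[lo, hI]
       (EFin \o (fun x => f0 x (xi j))).
    move=> j; apply: (integrableS mJ mI) (intf0 j).
    by move=> x; rewrite /= !in_itv /=; apply: sub.
  exists (\col_j (dx^-1 * Rintegral (@lebesgue_measure R) `[lo, hI]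
                                      (fun x => f0 x (xi j)))).
  split.
    move=> j; rewrite mxE; apply: mulr_gt0; first by rewrite invr_gt0.
    apply: Rint_gt0 => // x hx; apply: f0p => //; exact: sub.
  rewrite init ?i1 ?i2 //; apply/matrixP => m l; rewrite ord1 ALz_entry !mxE.
  have := (@Rint_sum R lo hI _ (index_enum 'I_N) (fun j => w j * xi j ^+ m)
             (fun j x => f0 x (xi j)) intj).2.
  move=> /= E; rewrite /cell -/lo -/hI E mulr_sumr; apply: eq_bigr => j _.
  rewrite mxE; ring.
have collR : forall k, (1 <= k <= K)%N -> inR xi w (u k i) -> inR xi w (us k i).
  move=> k hk hu; rewrite coll //.
  have t0 : 0 < dt / tau i by apply: divr_gt0 => //; apply: tau0.
  apply: inR_comb => //.
  - by rewrite invr_gt0; lra.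
  - by apply: divr_ge0; lra.
  - by case: (ent k i hk hi).
have uK : inR xi w (u K i).
  destruct K as [|[|k]]; first by [].
    exact: base.
  have hk : (1 <= k.+1 < k.+2)%N by rewrite ltn0Sn ltnSn.
  rewrite trans //.
  have [[EW _] _] := qp _ _ hk hi.
  rewrite -EW.
  have Wpos : forall i, (1 <= i <= Nx)%N -> posv (W k.+1 i).
    by move=> i' hi'; case: (qp _ _ hk hi') => [[_ ?] _].
  have /andP[i1 i2] := hi.
  have gp := fun j => @ghost_pos R N Nx xi fin xmin xmax ((k.+1).-1%:R * dt)
     (W k.+1) ximin ximax j xirng finp xlt Wpos.
  have gi : ghostW Nx xi fin xmin xmax ((k.+1).-1%:R * dt) (W k.+1) i = W k.+1 i.
    by rewrite /ghostW (negbTE (lt0n_neq0 i1)) (ltn_eqF (i2 : (i < Nx.+1)%N)).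
  rewrite -[W k.+1 i]gi.
  apply: (@transport_pos R M N xi w lam) => //; apply: gp; lia.
have hK : (1 <= K <= K)%N by rewrite K1 leqnn.
have [z [zp E]] := collR K hK uK.
by exists z; split.
Qed.
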